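(* Let $\mathcal{L}$ be a finite-dimensional Lie algebra over a field $F$ such that $d(\mathcal{L}) = \dim_F(\mathcal{L})$. Then either $\mathcal{L}$ is abelian, or $\mathcal{L} = Fx \oplus \mathcal{A}$ for some $x \in \mathcal{L}$, where $\mathcal{A}$ is an abelian ideal of codimension $1$ in $\mathcal{L}$ and $\mathrm{ad}(x)|_{\mathcal{A}} = \mathrm{id}_{\mathcal{A}}$ (in particular $\mathcal{L}$ is metabelian).
   Context: $d(\mathcal{L})$ denotes the minimal number of generators of $\mathcal{L}$ as a Lie algebra. *)

(* Defs.v *)
From HB Require Import structures.
From mathcomp Require Import all_boot all_order all_algebra.
Set Implicit Arguments. Unset Strict Implicit. Unset Printing Implicit Defensive.
Import GRing.Theory.
Local Open Scope ring_scope.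

Record lie_algebra (F : fieldType) (L : vectType F) := LieAlgebra {
  lie_br : L -> L -> L;
  lie_linl : forall (a : F) (u v w : L),
      lie_br (a *: u + v) w = a *: lie_br u w + lie_br v w;
  lie_linr : forall (a : F) (u v w : L),
      lie_br w (a *: u + v) = a *: lie_br w u + lie_br w v;
  lie_alt : forall x : L, lie_br x x = 0;
  lie_jacobi : forall x y z : L,
      lie_br x (lie_br y z) + lie_br y (lie_br z x) + lie_br z (lie_br x y) = 0
}.

Section LieDefs.
Variables (F : fieldType) (L : vectType F) (g : lie_algebra L).
Local Notation "[[ x , y ]]" := (lie_br g x y).

Definition lie_subalg (U : {vspace L}) : Prop :=
  forall u v, u \in U -> v \in U -> [[u, v]] \in U.

Definition lie_generates (S : seq L) : Prop :=
  forall U : {vspace L}, lie_subalg U -> {subset S <= U} -> U = fullv.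

Definition is_lie_gen_number (n : nat) : Prop :=
  (exists S : seq L, size S = n /\ lie_generates S) /\
  (forall S : seq L, lie_generates S -> (n <= size S)%N).

Definition lie_abelian : Prop := forall x y : L, [[x, y]] = 0.

Definition lie_ideal (A : {vspace L}) : Prop :=
  forall y a, a \in A -> [[y, a]] \in A.

Definition lie_abelian_sub (A : {vspace L}) : Prop :=
  forall a b, a \in A -> b \in A -> [[a, b]] = 0.

End LieDefs.

(* Main.v *)
Require Import Defs.
From HB Require Import structures.
From mathcomp Require Import all_boot all_order all_algebra.
From Stdlib Require Import Classical Lia.
Import GRing.Theory.
Local Open Scope ring_scope.

Section Aux.
Variables (F : fieldType) (L : vectType F) (g : lie_algebra L).
Local Notation "[[ x , y ]]" := (lie_br g x y).

Lemma br0l w : [[0, w]] = 0.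
Proof.
have h := lie_linl g 1 0 0 w; rewrite !scale1r addr0 in h.
by have := congr1 (fun t => t - [[0, w]]) h; rewrite addrK subrr => <-.
Qed.
Lemma br0r w : [[w, 0]] = 0.
Proof.
have h := lie_linr g 1 0 0 w; rewrite !scale1r addr0 in h.
by have := congr1 (fun t => t - [[w, 0]]) h; rewrite addrK subrr => <-.
Qed.
Lemma brZl a u w : [[a *: u, w]] = a *: [[u, w]].
Proof. by have := lie_linl g a u 0 w; rewrite addr0 br0l addr0. Qed.
Lemma brZr a u w : [[w, a *: u]] = a *: [[w, u]].
Proof. by have := lie_linr g a u 0 w; rewrite addr0 br0r addr0. Qed.
Lemma brDl u v w : [[u + v, w]] = [[u, w]] + [[v, w]].
Proof. by have := lie_linl g 1 u v w; rewrite !scale1r. Qed.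
Lemma brDr u v w : [[w, u + v]] = [[w, u]] + [[w, v]].
Proof. by have := lie_linr g 1 u v w; rewrite !scale1r. Qed.
Lemma brC u v : [[v, u]] = - [[u, v]].
Proof.
have := lie_alt g (u + v); rewrite brDl !brDr !lie_alt add0r addr0.
by move/eqP; rewrite addr_eq0 => /eqP ->; rewrite opprK.
Qed.
Lemma brNr u w : [[w, - u]] = - [[w, u]].
Proof. by rewrite -scaleN1r brZr scaleN1r. Qed.
Lemma brBr u v w : [[w, u - v]] = [[w, u]] - [[w, v]].
Proof. by rewrite brDr brNr. Qed.

Lemma indep (U : {vspace L}) u v b :
  v \notin U -> u \in U -> u + b *: v = 0 -> b = 0.
Proof.
move=> vU uU e; apply/eqP; apply/negPn/negP => b0; move/negP: vU; apply.
have -> : v = b^-1 *: (- u).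
  have bv : b *: v = - u by apply/eqP; rewrite -addr_eq0 addrC e.
  by rewrite -bv scalerA mulVf // scale1r.
by rewrite memvZ // memvN.
Qed.

Lemma span2 : is_lie_gen_number g (\dim (fullv : {vspace L})) ->
  forall x y, [[x, y]] \in (<[x]> + <[y]>)%VS.
Proof.
move=> [_ Hmin] x y; apply/negPn/negP => Hz.
have y0 : y != 0.
  by apply/negP => /eqP y0; move: Hz; rewrite y0 br0r mem0v.
have xy : x \notin <[y]>%VS.
  apply/negP => /vlineP [k xk]; move: Hz; rewrite xk brZl lie_alt scaler0 mem0v.
  by [].
set z := [[x, y]].
set W := <<[:: z; x; y]>>%VS.
have fW : free [:: z; x; y].
  by rewrite free_cons !span_cons span_nil addv0 Hz free_cons span_seq1 xy seq1_free y0.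
have dW : \dim W = 3%N by apply/eqP; exact: fW.
set S := x :: y :: (vbasis (W^C)%VS : seq L).
have gS : lie_generates g S.
  move=> V HV Hsub; apply/eqP; rewrite eqEsubv subvf /=.
  rewrite -(addv_complf W) subv_add; apply/andP; split.
    apply/span_subvP => t; rewrite !inE => /or3P [] /eqP ->.
    - by apply: HV; apply: Hsub; rewrite !inE eqxx ?orbT.
    - by apply: Hsub; rewrite !inE eqxx ?orbT.
    - by apply: Hsub; rewrite !inE eqxx ?orbT.
  have := vbasisP (W^C)%VS; case/andP => /eqP <- _.
  apply/span_subvP => t tb; apply: Hsub; by rewrite !inE tb !orbT.
have := Hmin S gS; rewrite /S /= size_tuple dimv_compl dW.
have : (3 <= \dim (fullv : {vspace L}))%N by rewrite -dW dimvS ?subvf.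
move: (\dim _) => n n3.
move/leP: n3 => n3 /leP; rewrite -?minusE; lia.
Qed.

Lemma indep2 (U : {vspace L}) u1 u2 v b1 b2 :
  v \notin U -> u1 \in U -> u2 \in U -> u1 + b1 *: v = u2 + b2 *: v -> b1 = b2.
Proof.
move=> vU u1U u2U e; apply/eqP; rewrite -subr_eq0; apply/eqP.
apply: (@indep U (u1 - u2) v); [exact: vU | by rewrite memvB |].
by rewrite scalerBl addrACA -opprD e subrr.
Qed.

Hypothesis Hs : forall x y, [[x, y]] \in (<[x]> + <[y]>)%VS.

Lemma decomp x y : exists a b, [[x, y]] = a *: x + b *: y.
Proof.
have /memv_addP [s /vlineP [a ->] [t /vlineP [b ->] ->] ] := Hs x y.
by exists a, b.
Qed.

Lemma exists_x u v : [[u, v]] != 0 -> exists x, [[x, [[u, v]]]] = [[u, v]].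
Proof.
move=> w0; have [p [q e] ] := decomp u v.
have eu : [[u, [[u, v]]]] = q *: [[u, v]].
  by rewrite {1}e brDr !brZr lie_alt scaler0 add0r.
have ev : [[v, [[u, v]]]] = (- p) *: [[u, v]].
  by rewrite {1}e brDr !brZr lie_alt scaler0 addr0 (brC u v) scalerN scaleNr.
case: (eqVneq q 0) => [q0|q0].
  have p0 : - p != 0.
    rewrite oppr_eq0; apply/negP => /eqP p0; move: w0.
    by rewrite e p0 q0 !scale0r addr0 eqxx.
  by exists ((- p)^-1 *: v); rewrite brZl ev scalerA mulVf // scale1r.
by exists (q^-1 *: u); rewrite brZl eu scalerA mulVf // scale1r.
Qed.

Lemma key x w : w != 0 -> [[x, w]] = w -> forall y, [[x, y]] - y \in <[x]>%VS.
Proof.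
move=> w0 xw y.
have wx : w \notin <[x]>%VS.
  apply/negP => /vlineP [k wk]; move: w0; rewrite -xw wk brZr lie_alt scaler0.
  by rewrite eqxx.
case: (boolP (y \in <[x]>%VS)) => [/vlineP [k ->] | yx].
  by rewrite brZr lie_alt scaler0 sub0r memvN memvZ // memv_line.
have [a [b e] ] := decomp x y.
suff b1 : b = 1 by rewrite e b1 scale1r addrK memvZ // memv_line.
case: (boolP (w \in (<[x]> + <[y]>)%VS)) => [|wxy].
  move=> /memv_addP [s /vlineP [p ->] [t /vlineP [q ->] ew] ].
  have q0 : q != 0.
    apply/negP => /eqP q0; move: wx; rewrite ew q0 scale0r addr0 memvZ //.
    by rewrite memv_line.
  have : (q * a) *: x + (q * b) *: y = p *: x + q *: y.
    by rewrite -ew -xw ew brDr !brZr lie_alt scaler0 add0r e scalerDr !scalerA.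
  move/(@indep2 <[x]>%VS _ _ _ _ _ yx (memvZ _ (memv_line x)) (memvZ _ (memv_line x))).
  by rewrite -{2}(mulr1 q) => /(mulfI q0).
have [c [d e2] ] := decomp x (y + w).
have E : (a *: x + b *: y) + 1 *: w = (c *: x + d *: y) + d *: w.
  by rewrite scale1r -e -{1}xw -brDr e2 scalerDr addrA.
have Uab : a *: x + b *: y \in (<[x]> + <[y]>)%VS by rewrite memv_add // memvZ // memv_line.
have Ucd : c *: x + d *: y \in (<[x]> + <[y]>)%VS by rewrite memv_add // memvZ // memv_line.
have d1 := @indep2 (<[x]> + <[y]>)%VS _ _ _ _ _ wxy Uab Ucd E.
rewrite -d1 !scale1r in E; move/addIr: E.
move=> E.
rewrite -{2}(scale1r y) in E.
exact: (@indep2 <[x]>%VS _ _ _ _ _ yx (memvZ _ (memv_line x)) (memvZ _ (memv_line x)) E).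
Qed.

End Aux.

Definition adm (F : fieldType) (L : vectType F) (g : lie_algebra L) (x : L) :=
  fun y => lie_br g x y - y.
Arguments adm {F L} g x.

Lemma adm_lin (F : fieldType) (L : vectType F) (g : lie_algebra L) (x : L) :
  linear (adm g x).
Proof.
move=> a u v; rewrite /adm lie_linr scalerBr.
by rewrite opprD addrACA.
Qed.

Arguments adm_lin {F L} g x.
Arguments span2 {F L g}.
Arguments exists_x {F L g} Hs {u v}.
Arguments key {F L g} Hs {x w}.
Arguments br0l {F L g} w.
Arguments br0r {F L g} w.
Arguments brZl {F L g}.
Arguments brZr {F L g}.
Arguments brDl {F L g}.
Arguments brDr {F L g}.
Arguments brC {F L g}.
Arguments brNr {F L g}.

HB.instance Definition _ (F : fieldType) (L : vectType F) (g : lie_algebra L) (x : L) :=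
  GRing.isLinear.Build F L L *:%R (adm g x) (adm_lin g x).

Theorem lemma2p2 (F : fieldType) (L : vectType F) (g : lie_algebra L) :
  is_lie_gen_number g (\dim (fullv : {vspace L})) ->
  lie_abelian g \/
  exists (x : L) (A : {vspace L}),
    [/\ (<[x]> + A)%VS = fullv /\ directv (<[x]> + A),
        lie_ideal g A, lie_abelian_sub g A,
        (\dim A).+1 = \dim (fullv : {vspace L})
      & forall a, a \in A -> lie_br g x a = a].
Proof.
move=> Hg; have Hs := span2 Hg.
case: (classic (lie_abelian g)) => [|nab]; [by left | right].
have [u /not_all_ex_not [v uv]] := not_all_ex_not _ _ nab.
have w0 : lie_br g u v != 0 by apply/eqP.
have [x xw] := exists_x Hs w0.
have Hk := key Hs w0 xw.
have x0 : x != 0.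
  by apply/eqP => x0; move: w0; rewrite -xw x0 br0l eqxx.
set A := lker (linfun (adm g x)).
have memA : forall a, (a \in A) = (lie_br g x a == a).
  by move=> a; rewrite memv_ker lfunE /= /adm subr_eq0.
have dec : forall y, exists k, y + k *: x \in A.
  move=> y; have /vlineP [k ek] := Hk y; exists k.
  rewrite memA brDr brZr lie_alt scaler0 addr0.
  by move/eqP: ek; rewrite subr_eq addrC => /eqP ->.
have cap0 : (<[x]> :&: A = 0)%VS.
  apply/eqP; rewrite -subv0; apply/subvP => t /memv_capP [/vlineP [k ->] ].
  by rewrite memA brZr lie_alt scaler0 memv0 eq_sym.
have full : (<[x]> + A)%VS = fullv.
  apply/eqP; rewrite eqEsubv subvf /=; apply/subvP => y _.
  have [k yk] := dec y.
  have -> : y = (- k) *: x + (y + k *: x).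
    by rewrite addrCA scaleNr addNr addr0.
  by rewrite memv_add // memvZ // memv_line.
have ab : lie_abelian_sub g A.
  move=> a b; rewrite !memA => /eqP xa /eqP xb.
  have /memv_addP [s /vlineP [p ->] [t /vlineP [q ->] eab] ] := Hs a b.
  have xab : lie_br g x (lie_br g a b) = lie_br g a b.
    by rewrite eab brDr !brZr xa xb.
  have J := lie_jacobi g x a b.
  rewrite xab (brC x b) xb brNr xa (brC a b) -addrA -opprD in J.
  move/eqP: J; rewrite subr_eq0 => /eqP h.
  by rewrite -{1}(addr0 (lie_br g a b)) in h; move/addrI: h => <-.
exists x, A; split.
- by split; [exact: full | apply/directv_addP].
- move=> y a aA; have [k yk] := dec y.
  have -> : y = (- k) *: x + (y + k *: x).
    by rewrite addrCA scaleNr addNr addr0.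
  rewrite brDl brZl (ab _ _ yk aA) addr0.
  have aA2 := aA; rewrite memA in aA2; by rewrite (eqP aA2) memvZ.
- exact: ab.
- by rewrite -full dimv_disjoint_sum // dim_vline x0.
- by move=> a; rewrite memA => /eqP.
Qed.
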